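(* Let $\mathfrak{A}$ be a finite-dimensional $C^*$-algebra with canonical normalized trace $\tau$ and $\|X\|_2=\sqrt{\tau(X^*X)}$. Let $\mathcal{N}$ be a $k$-net of order $d$ over $\mathfrak{A}$ with $2\le k\le\sqrt d$, and let $\mathcal{A}_1,\dots,\mathcal{A}_k$ be the linear spans of its parallel classes. Let $P=P^2=P^*\in\mathrm{Span}(\mathcal{N})$ with $\tau(P)=1/d$, and write $P-\frac1d I=\sum_{j=1}^k A_j$ with $A_j\in\mathcal{A}_j$, $\tau(A_j)=0$ (this decomposition is unique and each $A_j$ is self-adjoint). Put $t_j=\frac{d}{\sqrt{d-1}}\|A_j\|_2$ and let $r$ be an index with $t_r^2\ge 1/k$. Write $A_r=\sum_{s=1}^d\lambda_sQ_s$ where $Q_1,\dots,Q_d$ are the elements of the $r$-th parallel class. Then every $\lambda\in\{\lambda_1,\dots,\lambda_d\}$ (the spectrum of $A_r$) satisfies $$\lambda^2-\frac{d-2}{d}\lambda+\frac{d-1}{d^2}\Big(k-3+\frac1k\Big)\ge 0;$$ in particular $\lambda\le\lambda_-$ or $\lambda\ge\lambda_+$, where $$\lambda_\pm=\frac{1}{2d}\Big(d-2\pm\sqrt{(d-2)^2-4(d-1)\big(k-3+\tfrac1k\big)}\Big)$$ (the discriminant being nonnegative for $k\le\sqrt d$).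
   Context: $\tau=\mathrm{Tr}/\mathrm{Tr}(I)$, where $\mathrm{Tr}$ is the canonical trace of $\mathfrak{A}$ (assigning $1$ to each minimal projection). A $k$-net over $\mathfrak{A}$ is a set $\mathcal{N}$ of orthogonal projections in $\mathfrak{A}$ such that: (i) the relation ''$P=Q$ or $PQ=0$'' is an equivalence relation on $\mathcal{N}$ with exactly $k$ classes (parallel classes); (ii) if $P,Q\in\mathcal{N}$ lie in different classes then $\tau(PQ)=1/\dim(\mathfrak{A})$; (iii) the elements of each class sum to $I$. Order $d$ means every class has exactly $d$ elements. The spans $\mathcal{A}_j$ are commutative unital $*$-subalgebras that are pairwise quasi-orthogonal: $\tau(AB)=\tau(A)\tau(B)$ for $A\in\mathcal{A}_j,B\in\mathcal{A}_\ell$, $j\ne\ell$. *)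

(* Defs.v *)
(* A finite-dimensional C*-algebra is modelled (up to
   *-isomorphism) as a finite direct sum  (+)_{i<m} M_{n i}(C)  of full
   matrix algebras over algC; elements are families of blocks. *)
From HB Require Import structures.
From mathcomp Require Import all_boot all_order all_algebra all_field.
Set Implicit Arguments. Unset Strict Implicit. Unset Printing Implicit Defensive.
Import Order.TTheory GRing.Theory Num.Theory.
Local Open Scope ring_scope.

Section CAlg.
Variables (m : nat) (n : 'I_m -> nat).

Definition calg := forall i : 'I_m, 'M[algC]_(n i).

Definition azero : calg := fun i => 0.
Definition aone : calg := fun i => 1%:M.
Definition amul (X Y : calg) : calg := fun i => X i *m Y i.
Definition aadj (X : calg) : calg := fun i => (map_mx Num.conj (X i))^T.

(* canonical trace: 1 on every minimal projection *)
Definition aTr (X : calg) : algC := \sum_i \tr (X i).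
Definition atau (X : calg) : algC := aTr X / aTr aone.
Definition adim : nat := (\sum_i (n i) ^ 2)%N.

Definition anorm2sq (X : calg) : algC := atau (amul (aadj X) X).

Definition is_proj (P : calg) : Prop := amul P P = P /\ aadj P = P.

(* A k-net of order d, presented as an injective family Q j s
   (j : parallel class, s : element within the class). *)
Definition is_net (k d : nat) (Q : 'I_k -> 'I_d -> calg) : Prop :=
  [/\ forall j s, is_proj (Q j s),
      forall j1 s1 j2 s2, Q j1 s1 = Q j2 s2 -> j1 = j2 /\ s1 = s2,
      forall j s1 s2, s1 != s2 -> amul (Q j s1) (Q j s2) = azero,
      forall j1 j2 s1 s2, j1 != j2 ->
        atau (amul (Q j1 s1) (Q j2 s2)) = (adim%:R)^-1
    & forall j, (fun i => \sum_(s < d) Q j s i) = aone ].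

Definition in_class_span (k d : nat) (Q : 'I_k -> 'I_d -> calg) (j : 'I_k)
  (X : calg) : Prop :=
  exists c : 'I_d -> algC, X = fun i => \sum_(s < d) c s *: Q j s i.

Definition in_net_span (k d : nat) (Q : 'I_k -> 'I_d -> calg) (X : calg) : Prop :=
  exists c : 'I_k -> 'I_d -> algC,
    X = fun i => \sum_(j < k) \sum_(s < d) c j s *: Q j s i.

End CAlg.

(* Main.v *)
Require Import Defs.
From HB Require Import structures.
From mathcomp Require Import all_boot all_order all_algebra all_field.
From mathcomp Require Import ring zify.
From Stdlib Require Import FunctionalExtensionality.
Import Order.TTheory GRing.Theory Num.Theory.
Local Open Scope ring_scope.

Module Helpers.
Set Implicit Arguments. Unset Strict Implicit.

Section H.
Variables (m : nat) (n : 'I_m -> nat).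
Local Notation calg := (calg n).
Local Notation T := (@atau m n).
Local Notation M := (@amul m n).
Local Notation J := (@aadj m n).

Definition aadd (X Y : calg) : calg := fun i => X i + Y i.
Definition ascal (c : algC) (X : calg) : calg := fun i => c *: X i.
Definition lin (I : finType) (c : I -> algC) (U : I -> calg) : calg :=
  fun i => \sum_a c a *: U a i.

Lemma feq (X Y : calg) : (forall i, X i = Y i) -> X = Y.
Proof. by move=> h; apply: functional_extensionality_dep. Qed.

Lemma T_add X Y : T (aadd X Y) = T X + T Y.
Proof. by rewrite /atau /aTr /aadd -mulrDl -big_split /=; under eq_bigr do rewrite mxtraceD. Qed.

Lemma T_scal c X : T (ascal c X) = c * T X.
Proof. by rewrite /atau /aTr /ascal mulrA mulr_sumr; under eq_bigr do rewrite mxtraceZ. Qed.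

Lemma T_lin (I : finType) c (U : I -> calg) : T (lin c U) = \sum_a c a * T (U a).
Proof.
rewrite /atau /aTr /lin; under eq_bigr do rewrite raddf_sum.
rewrite exchange_big /= mulr_suml; apply: eq_bigr => a _.
by rewrite mulrA mulr_sumr; congr (_ * _); apply: eq_bigr => i _; rewrite mxtraceZ.
Qed.

Lemma M_addl X Y Z : M (aadd X Y) Z = aadd (M X Z) (M Y Z).
Proof. by apply: feq => i; rewrite /amul /aadd mulmxDl. Qed.
Lemma M_addr X Y Z : M Z (aadd X Y) = aadd (M Z X) (M Z Y).
Proof. by apply: feq => i; rewrite /amul /aadd mulmxDr. Qed.
Lemma M_scall c X Z : M (ascal c X) Z = ascal c (M X Z).
Proof. by apply: feq => i; rewrite /amul /ascal scalemxAl. Qed.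
Lemma M_scalr c X Z : M Z (ascal c X) = ascal c (M Z X).
Proof. by apply: feq => i; rewrite /amul /ascal scalemxAr. Qed.
Lemma M_linl (I : finType) c (U : I -> calg) Z :
  M (lin c U) Z = lin c (fun a => M (U a) Z).
Proof. by apply: feq => i; rewrite /amul /lin mulmx_suml; apply: eq_bigr => a _; rewrite scalemxAl. Qed.
Lemma M_linr (I : finType) c (U : I -> calg) Z :
  M Z (lin c U) = lin c (fun a => M Z (U a)).
Proof. by apply: feq => i; rewrite /amul /lin mulmx_sumr; apply: eq_bigr => a _; rewrite scalemxAr. Qed.
Lemma MA X Y Z : M X (M Y Z) = M (M X Y) Z.
Proof. by apply: feq => i; rewrite /amul mulmxA. Qed.
Lemma TC X Y : T (M X Y) = T (M Y X).
Proof. by rewrite /atau /aTr /amul; congr (_ / _); apply: eq_bigr => i _; rewrite mxtrace_mulC. Qed.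

Lemma J_add X Y : J (aadd X Y) = aadd (J X) (J Y).
Proof. by apply: feq => i; rewrite /aadj /aadd map_mxD linearD. Qed.
Lemma J_scal c X : J (ascal c X) = ascal c^* (J X).
Proof. by apply: feq => i; rewrite /aadj /ascal map_mxZ; apply/matrixP => x y; rewrite !mxE. Qed.
Lemma J_lin (I : finType) c (U : I -> calg) :
  J (lin c U) = lin (fun a => (c a)^*) (fun a => J (U a)).
Proof.
apply: feq => i; rewrite /aadj /lin map_mx_sum raddf_sum; apply: eq_bigr => a _.
by rewrite map_mxZ; apply/matrixP => x y; rewrite !mxE.
Qed.
Lemma J_mul X Y : J (M X Y) = M (J Y) (J X).
Proof. by apply: feq => i; rewrite /aadj /amul map_mxM trmx_mul. Qed.
Lemma J_one : J (aone n) = aone n.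
Proof. by apply: feq => i; rewrite /aadj /aone map_mx1 trmx1. Qed.
Lemma M1l X : M (aone n) X = X.
Proof. by apply: feq => i; rewrite /amul /aone mul1mx. Qed.
Lemma M1r X : M X (aone n) = X.
Proof. by apply: feq => i; rewrite /amul /aone mulmx1. Qed.

Lemma TrI_real : aTr (aone n) = (\sum_i n i)%N%:R.
Proof. by rewrite /aTr /aone natr_sum; apply: eq_bigr => i _; rewrite mxtrace1. Qed.

Lemma T_J X : T (J X) = (T X)^*.
Proof.
rewrite /atau TrI_real rmorphM /= fmorphV /= conjC_nat; congr (_ / _).
rewrite /aTr rmorph_sum; apply: eq_bigr => i _.
by rewrite /aadj mxtrace_tr trace_map_mx.
Qed.

Lemma trace_ge0 k (A : 'M[algC]_k) : 0 <= \tr ((map_mx Num.conj A)^T *m A).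
Proof.
rewrite /mxtrace; apply: sumr_ge0 => a _; rewrite mxE; apply: sumr_ge0 => b _.
by rewrite !mxE mulrC mul_conjC_ge0.
Qed.

Lemma N_ge0 X : 0 <= T (M (J X) X).
Proof.
rewrite /atau TrI_real; apply: divr_ge0 => //; apply: sumr_ge0 => i _.
exact: trace_ge0.
Qed.

Definition Nn X := T (M (J X) X).
Definition ip X Y := T (M (J X) Y).

Lemma Nn_ip X : Nn X = ip X X. Proof. by []. Qed.

Lemma N_comb a b U V : Nn (aadd (ascal a U) (ascal b V)) =
  a^* * a * Nn U + a^* * b * ip U V + b^* * a * ip V U + b^* * b * Nn V.
Proof.
rewrite /Nn /ip J_add !J_scal M_addl !M_addr !M_scall !M_scalr !T_add !T_scal.
by ring.
Qed.

Lemma ip_linl (I : finType) w (x : I -> calg) Y : (forall a, 0 <= w a) ->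
  ip (lin w x) Y = \sum_a w a * ip (x a) Y.
Proof.
move=> hw; rewrite /ip J_lin M_linl T_lin; apply: eq_bigr => a _.
by rewrite conj_Creal // ger0_real.
Qed.

Lemma ip_linr (I : finType) w (x : I -> calg) Y :
  ip Y (lin w x) = \sum_a w a * ip Y (x a).
Proof. by rewrite /ip M_linr T_lin. Qed.

Lemma variance (I : finType) (w : I -> algC) (x : I -> calg) :
  (forall a, 0 <= w a) -> 0 < \sum_a w a ->
  Nn (lin w x) <= (\sum_a w a) * \sum_a w a * Nn (x a).
Proof.
move=> hw hW; set W := \sum_a w a; set X := lin w x.
have Wr : W^* = W by rewrite conj_Creal // gtr0_real.
have h : 0 <= \sum_a w a * Nn (aadd (ascal W (x a)) (ascal (-1) X)).
  by apply: sumr_ge0 => a _; apply: mulr_ge0 => //; apply: N_ge0.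
have e1 : \sum_a w a * Nn (aadd (ascal W (x a)) (ascal (-1) X)) =
  \sum_a (W ^+ 2 * (w a * Nn (x a)) - W * (w a * ip (x a) X)
           - W * (w a * ip X (x a)) + Nn X * w a).
  apply: eq_bigr => a _; rewrite N_comb Wr rmorphN rmorph1; ring.
rewrite e1 big_split !sumrB /= -!mulr_sumr -ip_linl // -ip_linr -/X in h.
rewrite -/W /Nn -/(ip X X) in h *.
have : 0 <= W * (W * \sum_a w a * Nn (x a) - ip X X).
  by move: h; congr (0 <= _); ring.
rewrite pmulr_rge0 // subr_ge0 //.
Qed.
End H.


Section N.
Variables (m : nat) (n : 'I_m -> nat).
Local Notation calg := (calg n).
Local Notation T := (@atau m n).
Local Notation M := (@amul m n).
Local Notation J := (@aadj m n).
Variables (k d : nat) (Q : 'I_k -> 'I_d -> calg) (hQ : is_net Q).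
Hypothesis hk2 : (2 <= k)%N.
Hypothesis hTr : aTr (aone n) != 0.

Let e : algC := (d%:R)^-1.

Lemma T1 : T (aone n) = 1.
Proof. by rewrite /atau divff. Qed.

Lemma Qproj j s : M (Q j s) (Q j s) = Q j s /\ J (Q j s) = Q j s.
Proof. by case: hQ => h _ _ _ _; exact: h. Qed.

Lemma Qorth j s t : s != t -> M (Q j s) (Q j t) = azero n.
Proof. by case: hQ => _ _ h _ _; exact: h. Qed.

Lemma Qcross j1 j2 s1 s2 : j1 != j2 -> T (M (Q j1 s1) (Q j2 s2)) = (adim n)%:R^-1.
Proof. by case: hQ => _ _ _ h _; exact: h. Qed.

Lemma Qsum j : lin (fun _ => 1) (Q j) = aone n.
Proof.
case: hQ => _ _ _ _ h; rewrite -(h j); apply: feq => i.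
by apply: eq_bigr => s _; rewrite scale1r.
Qed.

Lemma other j : exists l : 'I_k, l != j.
Proof.
have k0 : (0 < k)%N by apply: leq_trans hk2.
case: j => j hjk; case: j hjk => [|j] hjk.
  by exists (Ordinal hk2); apply/eqP => /(congr1 val).
by exists (Ordinal k0); apply/eqP => /(congr1 val).
Qed.

Lemma TQ0 j t : T (Q j t) = d%:R * (adim n)%:R^-1.
Proof.
have [l hl] := other j.
rewrite -(M1r (Q j t)) -(Qsum l) M_linr T_lin.
rewrite (eq_bigr (fun _ => (adim n)%:R^-1)); last first.
  by move=> u _; rewrite mul1r Qcross // eq_sym.
by rewrite sumr_const card_ord mulr_natl.
Qed.

Lemma Dinv : (adim n)%:R^-1 = e ^+ 2.
Proof.
have h : 1 = d%:R * (d%:R * (adim n)%:R^-1) :> algC.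
  transitivity (T (aone n)); first by rewrite T1.
  have k0 : (0 < k)%N by apply: leq_trans hk2.
  have [l _] := other (Ordinal k0).
  rewrite -(Qsum l) T_lin (eq_bigr (fun _ => d%:R * (adim n)%:R^-1)).
    by rewrite sumr_const card_ord [RHS]mulr_natl.
  by move=> u _; rewrite mul1r TQ0.
have d0 : d%:R != 0 :> algC.
  by apply/eqP => d0; move: h; rewrite d0 mul0r => /eqP; rewrite oner_eq0.
rewrite /e exprVn; apply: (mulfI d0); apply: (mulfI d0).
by rewrite -h mulrA -expr2 divff // expf_neq0.
Qed.

Lemma dne0 : d%:R != 0 :> algC.
Proof.
apply/eqP => h; have [l _] := other (Ordinal (leq_trans (isT : (0 < 2)%N) hk2)).
move: T1; rewrite -(Qsum l) T_lin (eq_bigr (fun _ => 0)) ?big1 //.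
  by move/eqP; rewrite eq_sym oner_eq0.
by move=> u _; rewrite TQ0 h mul0r mulr0.
Qed.

Lemma TQ j t : T (Q j t) = e.
Proof. by rewrite TQ0 Dinv /e expr2 mulrA divff ?dne0 // mul1r. Qed.

Lemma QcrossE j1 j2 s1 s2 : j1 != j2 -> T (M (Q j1 s1) (Q j2 s2)) = e ^+ 2.
Proof. by move=> h; rewrite Qcross // Dinv. Qed.

Lemma MQlin j s c : M (Q j s) (lin c (Q j)) = ascal (c s) (Q j s).
Proof.
apply: feq => i; rewrite /amul /lin /ascal mulmx_sumr (bigD1 s) //= big1.
  have [/(congr1 (fun X => X i)) /= h _] := Qproj j s.
  by rewrite addr0 -scalemxAr [Q j s i *m _]h.
move=> t ht; have /(congr1 (fun X => X i)) /= h : M (Q j s) (Q j t) = azero n.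
  by apply: Qorth; rewrite eq_sym.
by rewrite -scalemxAr [Q j s i *m _]h /azero scaler0.
Qed.

Lemma T_span j c : T (lin c (Q j)) = e * \sum_s c s.
Proof. by rewrite T_lin mulr_sumr; apply: eq_bigr => s _; rewrite TQ mulrC. Qed.

Lemma span_J j X : in_class_span Q j X -> in_class_span Q j (J X).
Proof.
case=> c ->; exists (fun s => (c s)^*); rewrite -/(lin c (Q j)) J_lin.
by apply: feq => i; apply: eq_bigr => s _; have [_ ->] := Qproj j s.
Qed.

Lemma span_M j X Y : in_class_span Q j X -> in_class_span Q j Y ->
  in_class_span Q j (M X Y).
Proof.
case=> a ->; case=> b ->; exists (fun s => a s * b s).
rewrite -/(lin a (Q j)) -/(lin b (Q j)) M_linl.
apply: feq => i; rewrite /lin; apply: eq_bigr => s _; rewrite MQlin /ascal scalerA //.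
Qed.

Lemma span_Q l u j X : l != j -> in_class_span Q j X ->
  T (M (Q l u) X) = e * T X.
Proof.
move=> hl [c ->]; rewrite -/(lin c (Q j)) M_linr T_lin T_span mulr_sumr.
rewrite mulr_sumr; apply: eq_bigr => s _; rewrite QcrossE // expr2.
by rewrite mulrC mulrA.
Qed.

Lemma quasi j l X Y : j != l -> in_class_span Q j X -> in_class_span Q l Y ->
  T (M X Y) = T X * T Y.
Proof.
move=> hjl hX [b ->]; rewrite -/(lin b (Q l)) M_linr T_lin T_span !mulr_sumr.
apply: eq_bigr => u _; rewrite TC (@span_Q l u j X) 1?eq_sym //.
by ring.
Qed.
End N.
End Helpers.
Import Helpers.

Lemma disc_ge0 (k d : nat) : (2 <= k)%N -> (k^2 <= d)%N ->
  0 <= (d%:R - 2) ^+ 2 - 4 * (d%:R - 1) * (k%:R - 3 + (k%:R)^-1) :> algC.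
Proof.
move=> hk hd.
set z : int := (k%:Z * (d%:Z - 2)^+2 - 4 * (d%:Z - 1) * (k%:Z^+2 - 3*k%:Z + 1)).
have hz : 0 <= z.
  rewrite /z; have [t ->] : exists t, d = (k^2 + t)%N by exists (d - k^2)%N; lia.
  nia.
have k0 : k%:R != 0 :> algC by rewrite pnatr_eq0; apply/eqP => h; rewrite h in hk.
have -> : (d%:R - 2) ^+ 2 - 4 * (d%:R - 1) * (k%:R - 3 + (k%:R)^-1) = z%:~R / k%:R :> algC.
  rewrite /z !(rmorphB, rmorphM, rmorphD, rmorphXn, rmorph1) /= -!pmulrn.
  field.
  by [].
rewrite divr_ge0 // ?ler0z //.
Qed.

Theorem mainTheorem5 (m : nat) (n : 'I_m -> nat) (hn : forall i, (0 < n i)%N)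
  (k d : nat) (hk2 : (2 <= k)%N) (hkd : (k ^ 2 <= d)%N)
  (Q : 'I_k -> 'I_d -> calg n) (hQ : is_net Q)
  (P : calg n) (hP : is_proj P) (hPspan : in_net_span Q P)
  (hPtr : atau P = (d%:R)^-1)
  (A : 'I_k -> calg n)
  (hAspan : forall j, in_class_span Q j (A j))
  (hAtr : forall j, atau (A j) = 0)
  (hdec : forall i, P i - (d%:R)^-1 *: 1%:M = \sum_(j < k) A j i)
  (r : 'I_k)
  (hr : (k%:R)^-1 <= (d%:R ^+ 2 / (d%:R - 1)) * anorm2sq (A r))
  (lam : 'I_d -> algC)
  (hlam : A r = fun i => \sum_(s < d) lam s *: Q r s i) :
  let c := (d%:R - 1) / (d%:R ^+ 2) * (k%:R - 3 + (k%:R)^-1) : algC in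
  let disc := (d%:R - 2) ^+ 2 - 4 * (d%:R - 1) * (k%:R - 3 + (k%:R)^-1) : algC in
  let lamm := (2 * d%:R)^-1 * (d%:R - 2 - sqrtC disc) : algC in
  let lamp := (2 * d%:R)^-1 * (d%:R - 2 + sqrtC disc) : algC in
  forall s : 'I_d,
    0 <= lam s ^+ 2 - (d%:R - 2) / d%:R * lam s + c
    /\ (lam s <= lamm \/ lamp <= lam s).
Proof.
move=> c disc lamm lamp s.
have d4 : (4 <= d)%N.
  by apply: leq_trans hkd; rewrite (_ : 4 = 2 ^ 2)%N // leq_exp2r.
have hTr : aTr (aone n) != 0.
  apply/eqP => h0; move: hPtr; rewrite /atau h0 invr0 mulr0 => /esym/eqP.
  by rewrite invr_eq0 pnatr_eq0 => /eqP hd; rewrite hd in d4.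
set e : algC := d%:R^-1.
have d0 : d%:R != 0 :> algC by rewrite pnatr_eq0 -lt0n (leq_trans _ d4).
have k0 : k%:R != 0 :> algC by rewrite pnatr_eq0 -lt0n (leq_trans _ hk2).
have er : e \is Num.real by rewrite realV realn.
set Qs := Q r s.
have [hPP hPJ] := hP.
have [hQQ hQJ] := Qproj hQ r s.
set Pm : calg n := lin (fun _ => 1) A.
have hP' : P = aadd (ascal e (aone n)) Pm.
  apply: feq => i; rewrite /aadd /ascal /aone /Pm /lin.
  under eq_bigr do rewrite scale1r.
  by rewrite -hdec addrC subrK.
have hAr : amul Qs (A r) = ascal (lam s) Qs.
  by rewrite (_ : A r = lin lam (Q r)) // MQlin.
have hQA : forall j, j != r -> atau (amul Qs (A j)) = 0.
  move=> j hj; rewrite (@span_Q _ _ _ _ _ hQ hk2 hTr r s j (A j)) ?hAtr ?mulr0 //.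
  by rewrite eq_sym.
have TQP : atau (amul Qs P) = e ^+ 2 + lam s * e.
  rewrite hP' M_addr M_scalr M1r T_add T_scal (TQ hQ hk2 hTr) /Pm M_linr T_lin.
  rewrite (bigD1 r) //= big1 => [|j hj]; last by rewrite hQA ?mulr0.
  by rewrite hAr T_scal (TQ hQ hk2 hTr) /e; ring.
have NQP : Nn (amul Qs P) = atau (amul Qs P).
  by rewrite /Nn J_mul hPJ hQJ -MA (MA Qs Qs P) hQQ TC -MA hPP.
have lr : lam s \is Num.real.
  have -> : lam s = (atau (amul Qs P) - e^+2) * d%:R by rewrite TQP /e; field.
  by rewrite rpredM ?realn // rpredB ?rpredX // -NQP ger0_real // N_ge0.
set mu := e + lam s.
have mur : mu^* = mu by rewrite conj_Creal // rpredD.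
set b : 'I_k -> algC := fun j => (j != r)%:R.
set Y := lin b (fun j => amul Qs (A j)).
have hQP2 : amul Qs P = aadd (ascal mu Qs) (ascal 1 Y).
  rewrite hP' M_addr M_scalr M1r /Pm M_linr; apply: feq => i.
  rewrite /aadd /ascal /Y /lin (bigD1 r) //= [in RHS](bigD1 r) //= /b eqxx scale0r add0r.
  have -> : \sum_(j < k | j != r) (j != r)%:R *: amul Qs (A j) i =
            \sum_(j < k | j != r) 1 *: amul Qs (A j) i.
    by apply: eq_bigr => j hj; rewrite hj.
  by rewrite hAr /ascal !scale1r /mu scalerDl addrA.
have ipQY : ip Qs Y = 0.
  rewrite /ip hQJ /Y M_linr T_lin big1 // => j _.
  rewrite MA hQQ; case: (eqVneq j r) => [->|hj]; first by rewrite /b eqxx mul0r.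
  by rewrite hQA ?mulr0.
have ipYQ : ip Y Qs = 0.
  have h := T_J (amul Qs Y); rewrite J_mul hQJ in h.
  by rewrite /ip h; rewrite /ip hQJ in ipQY; rewrite ipQY rmorph0.
have NQs : Nn Qs = e by rewrite /Nn hQJ hQQ (TQ hQ hk2 hTr).
have NYeq : Nn Y = e^+2 + lam s * e - mu * mu * e.
  have := NQP; rewrite TQP hQP2 N_comb ipQY ipYQ NQs mur rmorph1 => h.
  by rewrite -h; ring.
have bge0 : forall j, 0 <= b j by move=> j; rewrite /b ler0n.
have Wv : \sum_j b j = k%:R - 1.
  have h1 : k%:R = 1 + \sum_(j < k | j != r) (1 : algC).
    have h0 : \sum_(j < k) (1 : algC) = 1 + \sum_(j < k | j != r) 1.
      by rewrite (bigD1 r).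
    by rewrite -h0 sumr_const card_ord.
  rewrite (bigD1 r) //= /b eqxx add0r (eq_bigr (fun _ => 1)) => [|j hj]; last by rewrite hj.
  by rewrite h1 addrAC subrr add0r.
have Wpos : 0 < \sum_j b j by rewrite Wv subr_gt0 ltr1n.
have hvar := variance (fun j => amul Qs (A j)) bge0 Wpos.
have NQA : forall j, j != r -> Nn (amul Qs (A j)) = e * Nn (A j).
  move=> j hj; rewrite /Nn J_mul hQJ -MA (MA Qs Qs) hQQ TC -MA.
  rewrite (@span_Q _ _ _ _ _ hQ hk2 hTr r s j); last 2 first.
  - by rewrite eq_sym.
  - apply: (span_M hQ); first exact: hAspan. apply: (span_J hQ). exact: hAspan.
  by rewrite TC.
set S := \sum_(j < k | j != r) Nn (A j).
have hS : \sum_j Nn (A j) = Nn (A r) + S by rewrite (bigD1 r).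
have sumb : \sum_a b a * Nn (amul Qs (A a)) = e * S.
  rewrite (bigD1 r) //= /b eqxx mul0r add0r /S mulr_sumr.
  by apply: eq_bigr => j hj; rewrite hj mul1r NQA.
have Pm2 : Pm = aadd (ascal 1 P) (ascal (-e) (aone n)).
  apply: feq => i; rewrite /Pm /lin /aadd /ascal /aone.
  under eq_bigr do rewrite scale1r.
  by rewrite -hdec scale1r scaleNr.
have sumN : \sum_j Nn (A j) = e - e^+2.
  have h1 : ip Pm Pm = \sum_j ip (A j) (A j).
    rewrite ip_linl => [|_]; last by apply: ler01.
    apply: eq_bigr => j _; rewrite mul1r ip_linr (bigD1 j) //= big1 ?addr0 ?mul1r //.
    move=> l hl; rewrite mul1r /ip.
    rewrite (@quasi _ _ _ _ _ hQ hk2 hTr j l) ?hAtr ?mulr0 //.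
    - by rewrite eq_sym.
    - apply: (span_J hQ); exact: hAspan.
  rewrite (eq_bigr (fun j => ip (A j) (A j))) // -h1 Pm2 -Nn_ip.
  have ne : (- e)^* = - e by rewrite conj_Creal // rpredN.
  rewrite N_comb ne rmorph1 /Nn /ip hPJ J_one hPP !M1r !M1l (T1 hTr) // hPtr.
  by rewrite /e; ring.
have hSv : S = e - e^+2 - Nn (A r) by rewrite -sumN hS; ring.
have d1 : 0 < d%:R - 1 :> algC by rewrite subr_gt0 ltr1n (leq_trans _ d4).
have ypos : 0 < (d%:R - 1) / d%:R ^+ 2 :> algC.
  by rewrite divr_gt0 // exprn_gt0 // ltr0n (leq_trans _ d4).
have hx : (d%:R - 1) / d%:R ^+ 2 / k%:R <= Nn (A r).
  move: hr; rewrite -(ler_pM2l ypos) mulrA.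
  rewrite (_ : (d%:R - 1) / d%:R ^+ 2 * (d%:R ^+ 2 / (d%:R - 1)) = 1) ?mul1r //.
  by field; rewrite ?d0 ?lt0r_neq0.
have G0 : 0 <= (k%:R - 1) * (e * S) - Nn Y.
  by rewrite subr_ge0 -Wv -sumb.
have H0 : 0 <= Nn (A r) - (d%:R - 1) / d%:R ^+ 2 / k%:R by rewrite subr_ge0.
have k1 : 0 <= k%:R - 1 :> algC by rewrite subr_ge0 ler1n (leq_trans _ hk2).
have part1 : 0 <= lam s ^+ 2 - (d%:R - 2) / d%:R * lam s + c.
  have -> : lam s ^+ 2 - (d%:R - 2) / d%:R * lam s + c =
     d%:R * ((k%:R - 1) * (e * S) - Nn Y) +
     (k%:R - 1) * (Nn (A r) - (d%:R - 1) / d%:R ^+ 2 / k%:R).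
    rewrite NYeq hSv /mu /c /e; field.
    by rewrite k0 d0.
  by rewrite addr_ge0 // mulr_ge0 // ler0n.
split => //.
have dg : 0 <= disc := @disc_ge0 k d hk2 hkd.
set q := sqrtC disc.
have q0 : 0 <= q by rewrite sqrtC_ge0.
have q2 : q ^+ 2 = disc by rewrite sqrtCK.
have fct : lam s ^+ 2 - (d%:R - 2) / d%:R * lam s + c = (lam s - lamm) * (lam s - lamp).
  have hc : c = ((d%:R - 2) ^+ 2 - q ^+ 2) / (4 * d%:R ^+ 2).
    by rewrite q2 /disc /c; field; rewrite d0.
  rewrite hc /lamm /lamp -/q; field.
  by rewrite d0.
have qr : q \is Num.real by rewrite ger0_real.
have lmr : lamm \is Num.real.
  by rewrite /lamm -/q rpredM ?rpredV ?rpredM ?rpredB ?realn.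
rewrite fct in part1.
case: (real_leP lr lmr) => h; [by left | right].
by move: part1; rewrite pmulr_rge0 ?subr_gt0 // subr_ge0.
Qed.
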